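(* Suppose that $\alpha_1$ and $\alpha_2$ are the roots of an irreducible quadratic polynomial in $\mathbb{Q}[x]$ such that $0 < \alpha_1 < 1 < \alpha_2$. Then the additive monoid $M_{\alpha_1} = \{f(\alpha_1) \mid f(x) \in \mathbb{N}_0[x,x^{-1}]\}$ is an FFM and, therefore, satisfies the ACCP.
   Context: $\mathbb{N}_0[x,x^{-1}]$ denotes the semiring of Laurent polynomials with coefficients in $\mathbb{N}_0$. A reduced additive monoid $M$ is an FFM (finite factorization monoid) if it is atomic and every nonzero element has only finitely many factorizations (formal sums of atoms, up to order, adding to it), where atoms are nonzero elements not expressible as a sum of two nonzero elements. $M$ satisfies the ACCP if every ascending chain of principal ideals $x_1 + M \subseteq x_2 + M \subseteq \cdots$ eventually stabilizes. *)

(* Defs.v *)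
From HB Require Import structures.
From mathcomp Require Import all_boot all_order all_algebra.
From mathcomp Require Import reals.
Set Implicit Arguments. Unset Strict Implicit. Unset Printing Implicit Defensive.
Import Order.TTheory GRing.Theory Num.Theory.
Local Open Scope ring_scope.

(* The evaluation at [a] of the Laurent polynomial with N0 coefficients
   given as a finite multiset [s] of exponents (one entry per monomial x^k,
   repeated according to its coefficient): f(a) = \sum_(k <- s) a^k. *)
Definition laurent_eval (R : unitRingType) (a : R) (s : seq int) : R :=
  \sum_(k <- s) a ^ k.

Definition Mlaurent (R : unitRingType) (a : R) : R -> Prop :=
  fun x => exists s : seq int, x = laurent_eval a s.

Section MonoidNotions.
Variables (R : realType) (M : R -> Prop).

Definition atom (a : R) : Prop :=
  M a /\ a != 0 /\
  ~ (exists b c, M b /\ M c /\ b != 0 /\ c != 0 /\ a = b + c).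

Definition is_factorization (x : R) (s : seq R) : Prop :=
  (forall a, a \in s -> atom a) /\ x = \sum_(a <- s) a.

Definition atomic : Prop :=
  forall x, M x -> x != 0 -> exists s, is_factorization x s.

Definition finitely_many_factorizations (x : R) : Prop :=
  exists L : seq (seq R),
    forall s, is_factorization x s -> exists2 t, t \in L & perm_eq s t.

Definition FFM : Prop :=
  atomic /\ forall x, M x -> x != 0 -> finitely_many_factorizations x.

Definition pideal (x : R) : R -> Prop := fun y => exists m, M m /\ y = x + m.

Definition ACCP : Prop :=
  forall u : nat -> R, (forall n, M (u n)) ->
    (forall n y, pideal (u n) y -> pideal (u n.+1) y) ->
    exists N, forall n, (N <= n)%N -> forall y, pideal (u n) y <-> pideal (u N) y.

End MonoidNotions.

(* Main.v *)
Require Import Defs.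
From HB Require Import structures.
From mathcomp Require Import all_boot all_order all_algebra.
From mathcomp Require Import reals lra zify.
From Stdlib Require Classical_Prop.
Import Order.TTheory GRing.Theory Num.Theory.
Local Open Scope ring_scope.
Set Implicit Arguments. Unset Strict Implicit.

Definition lp (N : int) (s : seq int) : {poly rat} := \sum_(k <- s) 'X^(absz (k + N)).

Lemma lp_eval (R : realType) (a : R) N s : a != 0 ->
  (forall k, k \in s -> 0 <= k + N) ->
  (map_poly ratr (lp N s)).[a] = a ^ N * laurent_eval a s.
Proof.
move=> a0 Hs; rewrite /lp rmorph_sum horner_sum /laurent_eval mulr_sumr.
rewrite big_seq [RHS]big_seq; apply: eq_bigr => k Hk.
rewrite /= map_polyXn hornerXn -expfzDr // [N + k]addrC.
by rewrite -[in RHS](gez0_abs (Hs k Hk)).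
Qed.

Lemma abs_le_sum (l : seq int) k : k \in l -> (`|k| <= \sum_(j <- l) `|j|)%N.
Proof. by move=> Hk; rewrite (big_rem k Hk) /= leq_addr. Qed.

Lemma wd (R : realType) (p : {poly rat}) (a1 a2 : R) :
  irreducible_poly p -> root (map_poly ratr p) a1 -> root (map_poly ratr p) a2 ->
  a1 != 0 -> a2 != 0 -> forall s t,
  laurent_eval a1 s = laurent_eval a1 t -> laurent_eval a2 s = laurent_eval a2 t.
Proof.
move=> [szp irr] r1 r2 n1 n2 s t e.
pose N : int := Posz (\sum_(j <- s ++ t) `|j|)%N.
have HN : forall k, k \in s ++ t -> 0 <= k + N.
  move=> k /abs_le_sum; rewrite /N; move: (\sum_(j <- s ++ t) `|j|)%N => m.
  case: k => n /=; first by move=> _; apply: addr_ge0.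
  move=> h; rewrite NegzE addrC subr_ge0 lez_nat; exact: h.
have Hs : forall k, k \in s -> 0 <= k + N by move=> k Hk; apply: HN; rewrite mem_cat Hk.
have Ht : forall k, k \in t -> 0 <= k + N by move=> k Hk; apply: HN; rewrite mem_cat Hk orbT.
pose g := lp N s - lp N t.
have ev : forall a : R, a != 0 -> (map_poly ratr g).[a] = a ^ N * (laurent_eval a s - laurent_eval a t).
  by move=> a a0; rewrite rmorphB hornerD hornerN !lp_eval // mulrBr.
have rg1 : root (map_poly ratr g) a1 by rewrite /root ev // e subrr mulr0.
have dp : p %| g.
  have dd : gcdp p g %| p by apply: dvdp_gcdl.
  have sz : size (gcdp p g) != 1%N.
    have : root (map_poly ratr (gcdp p g)) a1 by rewrite gcdp_map root_gcd r1 rg1.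
have nz : gcdp p g != 0.
      rewrite gcdp_eq0 negb_and; apply/orP; left.
      by rewrite -size_poly_gt0 (ltn_trans _ szp).
    move=> /root_size_gt1 h; rewrite neq_ltn -(size_map_poly (ratr : {rmorphism rat -> R})) h ?orbT //.
    by rewrite map_poly_eq0.
  have := irr _ sz dd => /eqp_dvdl <-; exact: dvdp_gcdr.
have : root (map_poly ratr g) a2 by apply: root_dvdp r2; rewrite dvdp_map.
rewrite /root ev // mulf_eq0 expfz_eq0 (negbTE n2) andbF /= subr_eq0.
by move/eqP.
Qed.

Lemma ev_cat (R : realType) (a : R) s t :
  laurent_eval a (s ++ t) = laurent_eval a s + laurent_eval a t.
Proof. by rewrite /laurent_eval big_cat. Qed.

Lemma ev_nil (R : realType) (a : R) : laurent_eval a [::] = 0.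
Proof. by rewrite /laurent_eval big_nil. Qed.

Lemma ev_cons (R : realType) (a : R) k s :
  laurent_eval a (k :: s) = a ^ k + laurent_eval a s.
Proof. by rewrite /laurent_eval big_cons. Qed.

Lemma ev_ge0 (R : realType) (a : R) s : 0 < a -> 0 <= laurent_eval a s.
Proof.
move=> ha; rewrite /laurent_eval; apply: sumr_ge0 => k _.
exact: ltW (exprz_gt0 _ ha).
Qed.

Lemma ev_gt0 (R : realType) (a : R) s : 0 < a -> s != [::] -> 0 < laurent_eval a s.
Proof.
case: s => [|k s] // ha _; rewrite ev_cons.
have := exprz_gt0 k ha; have := ev_ge0 s ha; lra.
Qed.

Lemma term_le (R : realType) (a : R) s k : 0 < a -> k \in s -> a ^ k <= laurent_eval a s.
Proof.
move=> ha; elim: s => [|j s IH] //; rewrite in_cons ev_cons => /orP [/eqP ->|/IH h].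
  have := ev_ge0 s ha; lra.
have := exprz_gt0 j ha; lra.
Qed.

Lemma bern (R : realType) (x : R) n : 1 <= x -> 1 + n%:R * (x - 1) <= x ^+ n.
Proof.
move=> hx; elim: n => [|n IH]; first by rewrite mul0r addr0 expr0.
rewrite exprS -natr1.
have h0 : 0 <= n%:R :> R by apply: ler0n.
have p1 : 0 <= x * (x ^+ n - (1 + n%:R * (x - 1))) by apply: mulr_ge0; lra.
have p2 : 0 <= n%:R * ((x - 1) * (x - 1)) by apply: mulr_ge0 => //; apply: mulr_ge0; lra.
nra.
Qed.

Lemma exprNegz (R : realType) (a : R) n : a ^ Negz n = a^-1 ^+ n.+1.
Proof. by rewrite NegzE -exprz_inv. Qed.

Definition good (R : realType) (a1 a2 : R) :=
  [/\ 0 < a1, a1 < 1, 1 < a2 & forall s t,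
  laurent_eval a1 s = laurent_eval a1 t -> laurent_eval a2 s = laurent_eval a2 t].

Lemma one_le (R : realType) (a1 a2 : R) k : 0 < a1 -> a1 < 1 -> 1 < a2 ->
  1 <= a1 ^ k + a2 ^ k.
Proof.
move=> h1 h2 h3; case: k => n.
  have := exprn_ege1 n (ltW h3); have := exprz_gt0 (Posz n) h1; rewrite -!exprnP; lra.
have := exprz_gt0 (Negz n) (lt_trans ltr01 h3).
rewrite exprNegz.
have : 1 <= a1^-1 ^+ n.+1 by apply: exprn_ege1; rewrite invf_ge1 // ltW.
lra.
Qed.

Lemma size_le (R : realType) (a1 a2 : R) s : 0 < a1 -> a1 < 1 -> 1 < a2 ->
  (size s)%:R <= laurent_eval a1 s + laurent_eval a2 s.
Proof.
move=> h1 h2 h3; elim: s => [|k s IH]; first by rewrite !ev_nil addr0.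
rewrite /= !ev_cons -natr1; have := one_le k h1 h2 h3; lra.
Qed.

Lemma exp_bound (R : realType) (a1 a2 : R) (B : R) : 0 < a1 -> a1 < 1 -> 1 < a2 ->
  0 <= B -> exists K : nat, forall k, a1 ^ k <= B -> a2 ^ k <= B -> (`|k| < K)%N.
Proof.
move=> h1 h2 h3 hB.
have hd : 1 < a1^-1 by rewrite invf_gt1.
have c0 : 0 < a2 - 1 by lra.
have d0 : 0 < a1^-1 - 1 by lra.
have e0 : 0 <= B / (a2 - 1) + B / (a1^-1 - 1).
  by apply: addr_ge0; apply: divr_ge0 => //; apply: ltW.
exists (Num.Def.archi_bound (B / (a2 - 1) + B / (a1^-1 - 1))).
have hb := archi_boundP e0.
have f1 : 0 <= B / (a2 - 1) by apply: divr_ge0 => //; apply: ltW.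
have f2 : 0 <= B / (a1^-1 - 1) by apply: divr_ge0 => //; apply: ltW.
case=> n /= Hk1 Hk2; rewrite -(ltr_nat R).
- have hb1 := bern n (ltW h3).
  rewrite -exprnP in Hk2.
  have : n%:R < B / (a2 - 1) by rewrite ltr_pdivlMr //; nra.
  lra.
- move: Hk1; rewrite exprNegz => Hk1.
  have hb1 := bern n.+1 (ltW hd).
  have : n.+1%:R < B / (a1^-1 - 1) by rewrite ltr_pdivlMr //; nra.
  lra.
Qed.

Lemma Mev (R : realType) (a : R) s : Mlaurent a (laurent_eval a s).
Proof. by exists s. Qed.

Lemma atom_form (R : realType) (a1 : R) x : 0 < a1 ->
  atom (Mlaurent a1) x -> exists k, x = a1 ^ k.
Proof.
move=> h1 [[s ->] [nz nsplit]].
case: s nz nsplit => [|k s]; first by rewrite ev_nil eqxx.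
case: s => [|j s] nz nsplit; first by exists k; rewrite ev_cons ev_nil addr0.
exfalso; apply: nsplit; exists (a1 ^ k), (laurent_eval a1 (j :: s)).
split; first by exists [:: k]; rewrite ev_cons ev_nil addr0.
split; first exact: Mev.
split; first by rewrite gt_eqF // exprz_gt0.
split; first by rewrite gt_eqF // ev_gt0.
by rewrite ev_cons.
Qed.

Lemma fact_list (R : realType) (a1 : R) (f : seq R) : 0 < a1 ->
  (forall a, a \in f -> atom (Mlaurent a1) a) ->
  exists ks, f = map (fun k => a1 ^ k) ks.
Proof.
move=> h1; elim: f => [|a f IH] H; first by exists [::].
have [k ->] := atom_form h1 (H a (mem_head a f)).
have [ks ->] : exists ks, f = map (fun k => a1 ^ k) ks by apply: IH => b hb; apply: H; rewrite in_cons hb orbT.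
by exists (k :: ks).
Qed.

Lemma sum_map_ev (R : realType) (a1 : R) ks :
  \sum_(a <- map (fun k => a1 ^ k) ks) a = laurent_eval a1 ks.
Proof. by rewrite big_map. Qed.

Lemma size_bound (R : realType) (a1 a2 : R) s t : good a1 a2 ->
  laurent_eval a1 t = laurent_eval a1 s ->
  (size t < Num.Def.archi_bound (laurent_eval a1 s + laurent_eval a2 s))%N.
Proof.
move=> [h1 h2 h3 wd] e.
have e2 := wd _ _ e.
have hs := size_le t h1 h2 h3.
have g1 := ev_ge0 s h1; have g2 := ev_ge0 s (lt_trans ltr01 h3).
have hb := archi_boundP (addr_ge0 g1 g2).
rewrite -(ltr_nat R); apply: le_lt_trans hb; rewrite -e -e2 //.
Qed.

Lemma atomic_ind (R : realType) (a1 a2 : R) n : good a1 a2 ->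
  forall s, laurent_eval a1 s != 0 ->
  (forall t, laurent_eval a1 t = laurent_eval a1 s -> (size t <= n)%N) ->
  exists f, is_factorization (Mlaurent a1) (laurent_eval a1 s) f.
Proof.
move=> G; have [h1 h2 h3 wd] := G.
elim: n => [|n IH] s nz Hsz.
  have := Hsz s erefl; rewrite leqn0 => /nilP sn.
  by move: nz; rewrite sn ev_nil eqxx.
case: (Classical_Prop.classic (atom (Mlaurent a1) (laurent_eval a1 s))) => Hat.
  exists [:: laurent_eval a1 s]; split; last by rewrite big_seq1.
  by move=> a; rewrite inE => /eqP ->.
have [b [c [[sb eb] [[sc ec] [nb [nc ex]]]]]] :
  exists b c, Mlaurent a1 b /\ Mlaurent a1 c /\ b != 0 /\ c != 0 /\
     laurent_eval a1 s = b + c.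
  apply: Classical_Prop.NNPP => H; apply: Hat; split; first exact: Mev.
  by split.
subst b c.
have scn : sc != [::] by apply/eqP => e; move: nc; rewrite e ev_nil eqxx.
have sbn : sb != [::] by apply/eqP => e; move: nb; rewrite e ev_nil eqxx.
have [fb [Hfb Sfb]] : exists f, is_factorization (Mlaurent a1) (laurent_eval a1 sb) f.
  apply: IH => // t et.
  have := Hsz (t ++ sc); rewrite ev_cat et -ex size_cat => /(_ erefl).
  have : (0 < size sc)%N by rewrite lt0n size_eq0.
  lia.
have [fc [Hfc Sfc]] : exists f, is_factorization (Mlaurent a1) (laurent_eval a1 sc) f.
  apply: IH => // t et.
  have := Hsz (sb ++ t); rewrite ev_cat et -ex size_cat => /(_ erefl).
  have : (0 < size sb)%N by rewrite lt0n size_eq0.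
  lia.
exists (fb ++ fc); split; last by rewrite big_cat /= -Sfb -Sfc.
by move=> a; rewrite mem_cat => /orP [/Hfb|/Hfc].
Qed.

Fixpoint seqs (T : eqType) (F : seq T) n : seq (seq T) :=
  if n is n'.+1 then [::] :: [seq a :: t | a <- F, t <- seqs F n'] else [:: [::]].

Lemma seqs_mem (T : eqType) (F : seq T) n s :
  all (mem F) s -> (size s <= n)%N -> s \in seqs F n.
Proof.
elim: n s => [|n IH] [|a s] //=; rewrite ?inE ?eqxx //.
move=> /andP [ha hs] hsz; apply/orP; right.
exact: (allpairs_f (fun a t => a :: t) ha (IH s hs hsz)).
Qed.

Lemma ffm_good (R : realType) (a1 a2 : R) : good a1 a2 -> FFM (Mlaurent a1).
Proof.
move=> G; have [h1 h2 h3 wd] := G.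
split.
  move=> x [s ->] nz.
  apply: (@atomic_ind _ _ _ (Num.Def.archi_bound (laurent_eval a1 s + laurent_eval a2 s)) G s nz) => t et.
  exact: ltnW (size_bound G et).
move=> x [s0 ->] nz.
set x0 := laurent_eval a1 s0; set y0 := laurent_eval a2 s0.
have g1 : 0 <= x0 := ev_ge0 s0 h1.
have g2 : 0 <= y0 := ev_ge0 s0 (lt_trans ltr01 h3).
have [K HK] := exp_bound h1 h2 h3 (addr_ge0 g1 g2).
pose F := [seq a1 ^ (Posz i) | i <- iota 0 K] ++ [seq a1 ^ (Negz i) | i <- iota 0 K].
exists (seqs F (Num.Def.archi_bound (x0 + y0))) => f [Hat Hsum].
exists f => //.
have [ks ef] := fact_list h1 Hat.
rewrite ef sum_map_ev in Hsum.
have ey : laurent_eval a2 ks = y0 by apply: wd; rewrite -Hsum.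
rewrite ef; apply: seqs_mem; last first.
  rewrite size_map; exact: ltnW (size_bound G (esym Hsum)).
apply/allP => a /mapP [k hk ->].
have hk1 : a1 ^ k <= x0 + y0 by rewrite Hsum; have := term_le h1 hk; lra.
have hk2 : a2 ^ k <= x0 + y0.
  by rewrite -ey; have := term_le (lt_trans ltr01 h3) hk; have := ev_ge0 ks h1; lra.
have := HK k hk1 hk2.
rewrite -[mem F _]/(_ \in F) /F mem_cat; case: k {hk hk1 hk2} => n /= hn; apply/orP.
  by left; apply: map_f; rewrite mem_iota.
by right; apply: map_f; rewrite mem_iota; apply: ltnW.
Qed.

Lemma accp_good (R : realType) (a1 a2 : R) : good a1 a2 -> ACCP (Mlaurent a1).
Proof.
move=> G; have [h1 h2 h3 wd] := G.
have h0 : 0 < a2 by apply: lt_trans ltr01 h3.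
move=> u Hu Hinc.
have Hu' : forall n, exists s : seq int, u n == laurent_eval a1 s.
  by move=> n; have [s e] := Hu n; exists s; apply/eqP.
pose rep n := xchoose (Hu' n).
have Hrep n : u n = laurent_eval a1 (rep n) by exact: eqP (xchooseP (Hu' n)).
pose v n := u n + laurent_eval a2 (rep n).
have step n : exists sm, u n = u n.+1 + laurent_eval a1 sm /\
    v n = v n.+1 + (laurent_eval a1 sm + laurent_eval a2 sm).
  have : pideal (Mlaurent a1) (u n) (u n).
    by exists 0; split; [exists [::]; rewrite ev_nil | rewrite addr0].
  move=> /Hinc [m [[sm ->] e]]; exists sm; split => //.
  have e2 : laurent_eval a2 (rep n) = laurent_eval a2 (rep n.+1 ++ sm).
    by apply: wd; rewrite ev_cat -!Hrep.
  rewrite /v e2 ev_cat; lra.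
have vge0 n : 0 <= v n.
  by rewrite /v Hrep; apply: addr_ge0; apply: ev_ge0.
have vmono n k : v (n + k)%N <= v n.
  elim: k => [|k IH]; first by rewrite addn0.
  have [sm [_ e]] := step (n + k); rewrite addnS.
  have := ev_ge0 sm h1; have := ev_ge0 sm h0; lra.
have jump n : u n.+1 != u n -> v n.+1 <= v n - 1.
  have [sm [e1 e2]] := step n.
  case: sm e1 e2 => [|k sm] e1 e2.
    by rewrite e1 ev_nil addr0 eqxx.
  move=> _; have := size_le (k :: sm) h1 h2 h3; rewrite /= -natr1.
  have : 0 <= (size sm)%:R :> R by apply: ler0n.
  lra.
have claim : forall j n, v n < j%:R -> exists N, forall k, u (N + k)%N = u N.
  elim=> [|j IH] n hv.
    by have := vge0 n; lra.
  case: (Classical_Prop.classic (exists k, u (n + k)%N.+1 != u (n + k)%N)).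
    move=> [k hk]; apply: (IH (n + k)%N.+1).
    have := jump _ hk; have := vmono n k; rewrite -natr1 in hv; lra.
  move=> H; exists n; elim=> [|k IHk]; first by rewrite addn0.
  rewrite addnS -IHk; apply/eqP; apply: Classical_Prop.NNPP => H'.
  by apply: H; exists k; apply/negP.
have [N HN] := claim _ 0%N (archi_boundP (vge0 0%N)).
exists N => n hn y.
by rewrite -(subnKC hn) HN.
Qed.

Theorem theorem4p7 (R : realType) (p : {poly rat}) (a1 a2 : R) :
  size p = 3%N -> irreducible_poly p ->
  root (map_poly ratr p) a1 -> root (map_poly ratr p) a2 ->
  0 < a1 -> a1 < 1 -> 1 < a2 ->
  FFM (Mlaurent a1) /\ ACCP (Mlaurent a1).
Proof.
move=> _ irr r1 r2 h1 h2 h3.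
have G : good a1 a2.
  split => //; apply: (wd irr r1 r2).
    by rewrite gt_eqF.
  by rewrite gt_eqF // (lt_trans ltr01 h3).
split; [exact: ffm_good G | exact: accp_good G].
Qed.
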